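(* Let $G$ be a finite metabelian group and $N$ a normal subgroup of $G$. Let $B$ be an abelian subgroup of $N$ of maximal order among abelian subgroups of $N$. Then $G$ contains a normal abelian subgroup $C$ with $C\le\langle B^G\rangle\le N$ and $|C|=|B|$.
   Context: A group is metabelian if its derived subgroup $[G,G]$ is abelian. $\langle B^G\rangle$ denotes the normal closure of $B$ in $G$, i.e. the subgroup generated by all conjugates $g^{-1}Bg$, $g\in G$. *)

(* Defs.v *)
From mathcomp Require Import all_boot all_fingroup all_solvable.
Set Implicit Arguments. Unset Strict Implicit. Unset Printing Implicit Defensive.
Import GroupScope.
Open Scope group_scope.

Definition metabelian (gT : finGroupType) (G : {set gT}) : bool :=
  abelian G^`(1).

Definition normal_closure (gT : finGroupType) (B G : {set gT}) : {set gT} :=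
  <<class_support B G>>.

(* Main.v *)
Require Import Defs.
From mathcomp Require Import all_boot all_fingroup all_solvable.
From mathcomp Require Import zify.
Import GroupScope.
Open Scope group_scope.

Lemma step (gT : finGroupType) (N B M X : {group gT}) :
  abelian B -> B \subset N -> X \subset N -> abelian X -> #|X| = #|B| ->
  (forall A : {group gT}, A \subset N -> abelian A -> #|A| <= #|B|)%N ->
  (#|'C_B(M)| * #|M| <= #|'C_B(M <*> X)| * #|M <*> X|)%N.
Proof.
move=> aB sBN sXN aX cXB maxB.
set K := 'C_B(M).
have eK' : 'C_B(M <*> X) = 'C_K(X) by rewrite centY /K setIA.
rewrite eK'.
have aK : abelian K by apply: abelianS aB; apply: subsetIl.
have cKK : 'C_X(K) \subset 'C(K) by apply: subsetIr.
have aCX : abelian 'C_X(K) by apply: abelianS aX; apply: subsetIl.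
have aD : abelian ('C_X(K) <*> K)%G.
  by rewrite abelianY aCX aK centsC.
have sDN : ('C_X(K) <*> K)%G \subset N.
  rewrite join_subG; apply/andP; split.
    exact: subset_trans (subsetIl _ _) sXN.
  exact: subset_trans (subsetIl _ _) sBN.
have hD := maxB _ sDN aD.
have eD : ('C_X(K) <*> K) = 'C_X(K) * K by apply: cent_joinEl.
have hmD := mul_cardG 'C_X(K) K.
rewrite /= eD in hD.
have sIK : 'C_X(K) :&: K \subset 'C_K(X).
  apply/subsetP=> y; rewrite !inE => /andP[/andP[yX _] yK].
  by rewrite yK /=; apply: (subsetP aX).
have hI := subset_leq_card sIK.
have sMX : X :&: M \subset 'C_X(K).
  apply/subsetP=> y; rewrite !inE => /andP[yX yM]; rewrite yX /=.
  have : M \subset 'C(K) by rewrite centsC; apply: subsetIr.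
  by move/subsetP/(_ y yM).
have hJ := subset_leq_card sMX.
have hmMX := mul_cardG M X.
have sMX2 : M * X \subset M <*> X by apply: mul_subG; [apply: joing_subl|apply: joing_subr].
have hMX2 := subset_leq_card sMX2.
rewrite setIC in hJ.
have j0 : (0 < #|M :&: X|)%N by apply: cardG_gt0.
set c := #|'C_X(K)| in hD hmD hJ *.
set k := #|K| in hmD *.
set i := #|'C_X(K) :&: K| in hmD hI.
set k' := #|'C_K(X)| in hI *.
set b := #|B| in hD cXB *.
set m := #|M| in hmMX *.
set j := #|M :&: X| in hmMX hJ j0.
set mx := #|M * X| in hmMX hMX2.
set m' := #|M <*> X| in hMX2 *.
set d := #|'C_X(K) * K| in hD hmD.
rewrite cXB in hmMX.
have h1 : (c * k <= b * k')%N by rewrite hmD; apply: leq_mul.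
have h3 : (k * m * c <= k' * m * b)%N.
  rewrite mulnAC [X in (_ <= X)%N]mulnAC; apply: leq_mul => //. rewrite mulnC [X in (_<=X)%N]mulnC. exact: h1.
have h4 : (k * m * j <= k * m * c)%N by apply: leq_mul.
have h5 : (k' * m * b <= k' * m' * j)%N.
  rewrite -mulnA hmMX mulnA. exact: leq_mul (leq_mul (leqnn _) hMX2) (leqnn _).
have h2 : (k * m * j <= k' * m' * j)%N by apply: leq_trans h4 (leq_trans h3 h5).
by rewrite leq_pmul2r in h2.
Qed.

Lemma grow (gT : finGroupType) (G N B : {group gT}) (s : seq gT) :
  N <| G -> B \subset N -> abelian B ->
  (forall A : {group gT}, A \subset N -> abelian A -> #|A| <= #|B|)%N ->
  {subset s <= G} ->
  exists M : {group gT}, [/\ B \subset M, (forall g, g \in s -> B :^ g \subset M),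
     M \subset <<class_support B G>> & (#|B| * #|B| <= #|'C_B(M)| * #|M|)%N].
Proof.
move=> nNG sBN aB maxB.
have sBMc : B \subset <<class_support B G>>.
  exact: subset_trans (sub_class_support _ _) (subset_gen _).
elim: s => [|g s IH] sG.
  exists B; split => //.
  by rewrite (setIidPl aB).
have [|M [sBM sJM sMMc hM]] := IH.
  by move=> x xs; apply: sG; rewrite inE xs orbT.
have gG : g \in G by apply: sG; rewrite inE eqxx.
have sXN : B :^ g \subset N.
  by rewrite -(normsP (normal_norm nNG) g gG) conjSg.
exists (M <*> (B :^ g)%G)%G; split.
- exact: subset_trans sBM (joing_subl _ _).
- move=> h; rewrite inE => /orP[/eqP -> | hs].
    exact: joing_subr.
  exact: subset_trans (sJM h hs) (joing_subl _ _).
- rewrite join_subG sMMc /=.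
  apply: subset_trans (subset_gen _).
  rewrite class_supportEr. exact: (bigcup_sup g gG).
- apply: leq_trans hM _.
  by apply: (@step _ N B M (B :^ g)%G) => //; rewrite ?abelianJ ?cardJg.
Qed.

Theorem mainTheorem19 (gT : finGroupType) (G N B : {group gT}) :
  metabelian G -> N <| G ->
  B \subset N -> abelian B ->
  (forall A : {group gT}, A \subset N -> abelian A -> #|A| <= #|B|)%N ->
  exists C : {group gT},
    [/\ C <| G, abelian C, C \subset normal_closure B G,
        normal_closure B G \subset N & #|C| = #|B| ].
Proof.
move=> metab nNG sBN aB maxB.
have sBG : B \subset G := subset_trans sBN (normal_sub nNG).
have sEG : {subset enum G <= G} by move=> x; rewrite mem_enum.
have [M [sBM sJM sMMc hM]] := @grow _ G N B (enum G) nNG sBN aB maxB sEG.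
set Mc := (<<class_support B G>>)%G.
have eM : M :=: Mc.
  apply/eqP; rewrite eqEsubset sMMc /= gen_subG.
  apply/subsetP=> y /imset2P[x g xB gG ->].
  apply: (subsetP (sJM g _)); first by rewrite mem_enum.
  by rewrite memJ_conjg.
rewrite eM in hM.
have sBMc : B \subset Mc by rewrite -eM.
have sMcN : Mc \subset N.
  by rewrite /= gen_subG class_support_sub_norm // normal_norm.
have nMcG : Mc <| G.
  rewrite /normal /= gen_subG class_support_sub_norm ?normG //=.
  by apply: norms_gen; apply: class_support_norm.
have nWG : (G^`(1) :&: Mc)%G <| G by apply: normalI => //; apply: der_normal.
have aW : abelian (G^`(1) :&: Mc) by apply: abelianS metab; apply: subsetIl.
have nZG : 'Z(Mc) <| G := char_normal_trans (center_char Mc) nMcG.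
have cZW : 'Z(Mc) \subset 'C(G^`(1) :&: Mc).
  apply: subset_trans (subsetIr _ _) _; apply: centS; apply: subsetIr.
have aC : abelian ((G^`(1) :&: Mc) <*> 'Z(Mc))%G.
  by rewrite abelianY aW center_abelian cZW.
have sCMc : ((G^`(1) :&: Mc) <*> 'Z(Mc))%G \subset Mc.
  by rewrite join_subG subsetIr center_sub.
exists ((G^`(1) :&: Mc) <*> 'Z(Mc))%G; split => //.
- exact: normalY.
have hCle := maxB _ (subset_trans sCMc sMcN) aC.
apply/eqP; rewrite eqn_leq hCle /=.
have cZB : 'Z(Mc) \subset 'C(B).
  apply: subset_trans (subsetIr _ _) _; exact: centS.
have aD : abelian (B <*> 'Z(Mc))%G by rewrite abelianY aB center_abelian cZB.
have sDN : (B <*> 'Z(Mc))%G \subset N.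
  by rewrite join_subG sBN (subset_trans (center_sub _) sMcN).
have eD : #|B <*> 'Z(Mc)| = #|B|.
  apply/eqP; rewrite eqn_leq (maxB _ sDN aD) subset_leq_card //; exact: joing_subl.
have sZB : 'Z(Mc) \subset B.
  apply/subsetP=> z zZ.
  have zD : z \in B <*> 'Z(Mc) by apply: (subsetP (joing_subr _ _)).
  by move: (subset_cardP (esym eD) (joing_subl B 'Z(Mc))) => /(_ z) ->.
have nWB : B \subset 'N(G^`(1) :&: Mc).
  exact: subset_trans sBG (normal_norm nWG).
have sMcBW : Mc \subset B * (G^`(1) :&: Mc).
  rewrite -norm_joinEl // /Mc /= gen_subG.
  apply/subsetP=> y /imset2P[x g xB gG ->].
  rewrite conjg_mulR; apply: groupM; first by apply: (subsetP (joing_subl _ _)).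
  apply: (subsetP (joing_subr _ _)); rewrite inE; apply/andP; split.
    by apply: mem_commg; [apply: (subsetP sBG)|].
  rewrite commgEl; apply: groupM.
    by rewrite groupV; apply: (subsetP sBMc).
  by apply: mem_gen; apply: memJ_class_support.
have h1 := subset_leq_card sMcBW.
have h2 := mul_cardG B (G^`(1) :&: Mc).
have h3 := mul_cardG (G^`(1) :&: Mc) 'Z(Mc).
have eC : (G^`(1) :&: Mc) <*> 'Z(Mc) = (G^`(1) :&: Mc) * 'Z(Mc).
  by apply: cent_joinEl; rewrite centsC.
rewrite eC.
have sI : (G^`(1) :&: Mc) :&: 'Z(Mc) \subset B :&: (G^`(1) :&: Mc).
  by rewrite setIC subsetI subsetIr andbT; apply: subset_trans (subsetIl _ _) sZB.
have h4 := subset_leq_card sI.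
have sCZ : 'C_B(Mc) \subset 'Z(Mc) by apply: setSI.
have h5 := subset_leq_card sCZ.
have i0 : (0 < #|B :&: (G^`(1) :&: Mc)|)%N by apply: cardG_gt0.
set b := #|B| in hM h2 h5 *.
set cb := #|'C_B(Mc)| in hM h5.
set mc := #|Mc| in hM h1.
set z := #|'Z(Mc)| in h3 h5.
set w := #|G^`(1) :&: Mc| in h2 h3.
set bw := #|B * (G^`(1) :&: Mc)| in h1 h2.
set ib := #|B :&: (G^`(1) :&: Mc)| in h2 h4 i0.
set cz := #|(G^`(1) :&: Mc) * 'Z(Mc)| in h3 *.
set iz := #|(G^`(1) :&: Mc) :&: 'Z(Mc)| in h3 h4.
have bp : (0 < b)%N by apply: cardG_gt0.
have k0 : (b * b * ib <= cb * mc * ib)%N by apply: leq_mul.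
have k0' : (cb * mc * ib <= z * bw * ib)%N by apply: leq_mul => //; apply: leq_mul.
have k1 : (b * b * ib <= z * b * w)%N.
  apply: leq_trans k0 (leq_trans k0' _). by rewrite -mulnA -h2 mulnA.
have k2 : (b * ib <= z * w)%N.
  rewrite -(leq_pmul2l bp). rewrite !mulnA. apply: leq_trans k1 _.
  by rewrite [(b * z)%N]mulnC.
have k3 : (b * ib <= cz * ib)%N.
  apply: leq_trans k2 _. rewrite [(z * w)%N]mulnC h3. exact: leq_mul.
by rewrite leq_pmul2r in k3.
Qed.
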